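(* Let $\rho_x=\frac12(I+\vec v_x\cdot\vec\sigma)$, $x=1,2,3$, be qubit states with equal purity $\|\vec v_1\|=\|\vec v_2\|=\|\vec v_3\|=f$, given with equal prior probabilities $1/3$, and suppose the convex hull of $\vec v_1,\vec v_2,\vec v_3$ contains the origin. Then $$P_{\mathrm{guess}}=\frac13+\frac13 f,$$ independently of any other details of the states (e.g. the angles between them).
   Context: $\vec\sigma=(X,Y,Z)$ are the Pauli matrices; the purity of a qubit state is the Euclidean norm of its Bloch vector. $P_{\mathrm{guess}}=\max\sum_{x=1}^3\frac13\mathrm{tr}[M_x\rho_x]$ over POVMs $\{M_x\}_{x=1}^3$ (positive semidefinite operators summing to $I$). *)

(* Defs.v *)
From HB Require Import structures.
From mathcomp Require Import all_boot all_order all_algebra.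
From mathcomp Require Import complex.
Set Implicit Arguments. Unset Strict Implicit. Unset Printing Implicit Defensive.
Import Order.TTheory GRing.Theory Num.Theory.
Local Open Scope ring_scope.
Local Open Scope complex_scope.

Section Qubit.
Variable R : rcfType.
Local Notation C := (R[i]).

Definition ctrans m n (A : 'M[C]_(m, n)) : 'M[C]_(n, m) := (map_mx Num.conj A)^T.

(* positive semidefinite: <v, A v> is a nonnegative real for every vector v
   (in the partial order of the numClosedField C, 0 <= z means z is real and >= 0) *)
Definition psd (A : 'M[C]_2) : Prop :=
  forall v : 'cV[C]_2, 0 <= (ctrans v *m A *m v) 0 0.

Definition pauliX : 'M[C]_2 := \matrix_(i < 2, j < 2) (if i == j then 0 else 1).
Definition pauliY : 'M[C]_2 :=
  \matrix_(i < 2, j < 2)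
    (if i == j then 0 else if (i : nat) == 0%N then - 'i else 'i).
Definition pauliZ : 'M[C]_2 :=
  \matrix_(i < 2, j < 2) (if i == j then (if (i : nat) == 0%N then 1 else -1) else 0).

Definition bloch_state (v : 'rV[R]_3) : 'M[C]_2 :=
  (1 / 2 : C) *: (1%:M + ((v 0 0)%:C *: pauliX + (v 0 1)%:C *: pauliY
                          + (v 0 2)%:C *: pauliZ)).

Definition bnorm (v : 'rV[R]_3) : R := Num.sqrt (\sum_(k < 3) v 0 k ^+ 2).

Definition is_state (rho : 'M[C]_2) : Prop := psd rho /\ \tr rho = 1.

Definition is_povm (M : 'I_3 -> 'M[C]_2) : Prop :=
  (forall x, psd (M x)) /\ \sum_(x < 3) M x = 1%:M.

Definition succ_prob (rho M : 'I_3 -> 'M[C]_2) : C :=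
  \sum_(x < 3) (1 / 3) * \tr (M x *m rho x).

Definition origin_in_hull (v : 'I_3 -> 'rV[R]_3) : Prop :=
  exists lam : 'I_3 -> R, (forall x, 0 <= lam x) /\ \sum_(x < 3) lam x = 1 /\
    \sum_(x < 3) lam x *: v x = 0.

Definition is_Pguess (rho : 'I_3 -> 'M[C]_2) (p : C) : Prop :=
  (forall M, is_povm M -> succ_prob rho M <= p) /\
  (exists M, is_povm M /\ succ_prob rho M = p).

End Qubit.

(* Main.v *)
Require Import Defs.
From HB Require Import structures.
From mathcomp Require Import all_boot all_order all_algebra.
From mathcomp Require Import complex ring lra.
Import Order.TTheory GRing.Theory Num.Theory.
Local Open Scope ring_scope.
Local Open Scope complex_scope.
Section S.
Variable R : rcfType.
Local Notation C := R[i].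
Definition mk2 (p q : C) : 'cV[C]_2 := \col_(i < 2) (if (i:nat) == 0%N then p else q).
Definition mk22 (a b c d : C) : 'M[C]_2 := \matrix_(i<2,j<2)
  if (i:nat)==0%N then (if (j:nat)==0%N then a else b) else (if (j:nat)==0%N then c else d).
Lemma psd_mk {a b c d : C} p q : psd (mk22 a b c d) ->
  0 <= Num.conj p * (a * p + b * q) + Num.conj q * (c * p + d * q).
Proof.
move/(_ (mk2 p q)); rewrite /ctrans !mxE !big_ord_recl !big_ord0 !mxE /=.
rewrite !big_ord_recl !big_ord0 !mxE /=.
set L := (X in 0 <= X -> _); set Rr := (X in _ -> 0 <= X).
by have -> : Rr = L by rewrite /L /Rr; ring.
Qed.
Definition i0 : 'I_2 := @Ordinal 2 0 isT.
Definition i1 : 'I_2 := @Ordinal 2 1 isT.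
Lemma mxeq (M : 'M[C]_2) : M = mk22 (M i0 i0) (M i0 i1) (M i1 i0) (M i1 i1).
Proof.
apply/matrixP => i j; rewrite /mk22 mxE.
by case: i => [[|[|//]] Hi]; case: j => [[|[|//]] Hj] /=; congr (M _ _); apply: val_inj.
Qed.
Lemma blochE (v : 'rV[R]_3) : bloch_state v =
  mk22 (((1 + v 0 2)/2) +i* 0) ((v 0 0/2) -i* (v 0 1/2))
       ((v 0 0/2) +i* (v 0 1/2)) (((1 - v 0 2)/2) +i* 0).
Proof.
apply/matrixP => i j; rewrite /bloch_state /mk22 /pauliX /pauliY /pauliZ !mxE.
case: i => [[|[|//]] Hi]; case: j => [[|[|//]] Hj]; rewrite /= ?mxE /=.
all: rewrite (_ : (1/2 : C) = (1/2 : R)%:C); last by rewrite fmorph_div rmorph1 rmorph_nat.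
all: apply/eqP; rewrite eq_complex /=; apply/andP; split; apply/eqP; ring.
Qed.

Lemma bnormE (v : 'rV[R]_3) f : bnorm v = f ->
  0 <= f /\ f ^+ 2 = v 0 0 ^+ 2 + v 0 1 ^+ 2 + v 0 2 ^+ 2.
Proof.
rewrite /bnorm !big_ord_recl big_ord0 addr0 => <-; split; first exact: sqrtr_ge0.
rewrite sqr_sqrtr; last by rewrite !addr_ge0 ?sqr_ge0.
by rewrite addrA; congr (_ ^+ 2 + _ ^+ 2 + _ ^+ 2); congr (v _ _); apply: val_inj.
Qed.

Lemma key {M : 'M[C]_2} {v : 'rV[R]_3} {f} : psd M -> bnorm v = f ->
  complex.Im (\tr (M *m bloch_state v)) = 0 /\
  complex.Re (\tr (M *m bloch_state v)) <= (1+f)/2 * complex.Re (\tr M).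
Proof.
move=> hM /bnormE [f0 ff]; rewrite blochE (mxeq M) in hM *.
move: (M i0 i0) (M i0 i1) (M i1 i0) (M i1 i1) hM => [a00 b00] [a01 b01] [a10 b10] [a11 b11] hM.
move: (v 0 0) (v 0 1) (v 0 2) ff => x y z ff.
have h1 := psd_mk 1 0 hM. have h2 := psd_mk 0 1 hM.
have h3 := psd_mk 1 1 hM. have h4 := psd_mk 1 'i hM.
have h5 := psd_mk (((f - z)/2) +i* 0) ((-x/2) +i* (-y/2)) hM.
have h6 := psd_mk ((-x/2) +i* (y/2)) (((f + z)/2) +i* 0) hM.
move: h1 h2 h3 h4 h5 h6; rewrite !lecE /=.
rewrite /mxtrace !big_ord_recl !big_ord0 !mxE /=.
rewrite !big_ord_recl !big_ord0 !mxE /=.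
rewrite ?(mul0r, mulr0, addr0, add0r, subr0, sub0r, mul1r, mulr1, oppr0, mulN1r).
move=> /andP[/eqP e1 _] /andP[/eqP e2 _] /andP[/eqP e3 _] /andP[/eqP e4 _].
move=> /andP[_ g5] /andP[_ g6].
move: g5; set E5 := (X in 0 <= X -> _) => g5.
move: g6; set E6 := (X in 0 <= X -> _) => g6.
have hb00 : b00 = 0 by lra.
have hb11 : b11 = 0 by lra.
have hb01 : b01 = - b10 by lra.
have ha01 : a01 = a10 by lra.
rewrite hb00 hb11 hb01 ha01 in E5 E6 g5 g6 *.
split.
rewrite ?mul0r ?mulr0 ?addr0 ?add0r.
by ring.

set L := (X in X <= _); set Bd := (X in _ <= X).
have E : f * (Bd - L) = E5 + E6 + (f^+2 - (x^+2 + y^+2 + z^+2))/4 * (a00 + a11).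
  rewrite /L /Bd /E5 /E6 ?(mul0r, mulr0, addr0, add0r, subr0, sub0r, mul1r, mulr1, oppr0, mulN1r); lra.
rewrite ff subrr mul0r mul0r addr0 in E.
have [fz|fpos] := eqVneq f 0.
  rewrite fz in ff.
  have hx : x = 0.
    apply/eqP; rewrite -sqrf_eq0; apply/eqP.
    have := sqr_ge0 x; have := sqr_ge0 y; have := sqr_ge0 z. lra.
  have hy : y = 0.
    apply/eqP; rewrite -sqrf_eq0; apply/eqP.
    have := sqr_ge0 x; have := sqr_ge0 y; have := sqr_ge0 z. lra.
  have hz : z = 0.
    apply/eqP; rewrite -sqrf_eq0; apply/eqP.
    have := sqr_ge0 x; have := sqr_ge0 y; have := sqr_ge0 z. lra.
  rewrite /L /Bd hx hy hz fz; lra.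
have fp : 0 < f by rewrite lt_def fpos f0.
by rewrite -subr_ge0 -(pmulr_rge0 _ fp) E addr_ge0.
Qed.

Lemma ReD (a b : C) : complex.Re (a + b) = complex.Re a + complex.Re b.
Proof. by case: a; case: b. Qed.
Lemma ImD (a b : C) : complex.Im (a + b) = complex.Im a + complex.Im b.
Proof. by case: a; case: b. Qed.
Lemma ReM (k : R) (a : C) : complex.Re (k%:C * a) = k * complex.Re a.
Proof. by case: a => x y /=; rewrite mul0r subr0. Qed.
Lemma ImM (k : R) (a : C) : complex.Im (k%:C * a) = k * complex.Im a.
Proof. by case: a => x y /=; rewrite mul0r addr0. Qed.
Lemma c13 : (1/3 : C) = (1/3 : R)%:C.
Proof. by rewrite fmorph_div rmorph1 rmorph_nat. Qed.

End S.

Arguments mk22 {R}. Arguments mk2 {R}.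
Section S.
Variable R : rcfType.
Local Notation C := R[i].
Lemma fin3 (t0 t1 t2 : C) (k : R) : complex.Im t0 = 0 -> complex.Im t1 = 0 ->
  complex.Im t2 = 0 -> complex.Re t0 + complex.Re t1 + complex.Re t2 <= 3 * k ->
  1/3 * t0 + (1/3 * t1 + (1/3 * t2 + 0)) <= k%:C.
Proof.
rewrite c13; case: t0 => a0 b0; case: t1 => a1 b1; case: t2 => a2 b2 /= -> -> -> h.
rewrite lecE /=; apply/andP; split; first by rewrite !(mulr0, mul0r, addr0).
rewrite !(mulr0, mul0r, subr0, addr0); lra.
Qed.

Lemma fin_ineq (f m0 m1 m2 t0 t1 t2 : R) : m0 + (m1 + m2) = 2 ->
  t0 <= (1+f)/2 * m0 -> t1 <= (1+f)/2 * m1 -> t2 <= (1+f)/2 * m2 ->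
  t0 + t1 + t2 <= 3 * (1/3 + 1/3 * f).
Proof.
move=> h r0 r1 r2; have hm2 : m2 = 2 - m0 - m1 by lra.
rewrite hm2 in r2; lra.
Qed.

Lemma upper (v : 'I_3 -> 'rV[R]_3) (f : R) (M : 'I_3 -> 'M[C]_2) :
  (forall x, bnorm (v x) = f) -> is_povm M ->
  succ_prob (fun x => bloch_state (v x)) M <= ((1 / 3 + 1 / 3 * f)%:C).
Proof.
move=> hn [Mpsd Msum].
have K x := @key R _ _ _ (Mpsd x) (hn x).
have htr := congr1 mxtrace Msum.
rewrite !big_ord_recl big_ord0 addr0 !mxtraceD mxtrace1 in htr.
rewrite (_ : (2%:R : C) = (2%:R : R)%:C) in htr; last by rewrite rmorph_nat.
have hRe := congr1 (@complex.Re R) htr.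
rewrite !ReD in hRe.
rewrite [RHS]/= in hRe.
rewrite /succ_prob !big_ord_recl big_ord0.
have [e0 r0] := K ord0.
have [e1 r1] := K (lift ord0 ord0).
have [e2 r2] := K (lift ord0 (lift ord0 ord0)).
have H := @fin3 _ _ _ (1/3 + 1/3 * f) e0 e1 e2.
apply: H.
move: hRe r0 r1 r2.
move: (complex.Re (\tr (M ord0))) (complex.Re (\tr (M (lift ord0 ord0)))) (complex.Re (\tr (M (lift ord0 (lift ord0 ord0))))) => m0 m1 m2 hRe r0 r1 r2.
exact: (@fin_ineq f _ _ _ _ _ _ hRe r0 r1 r2).
Qed.

Lemma scale_mk22 (k a b c d : C) : k *: mk22 a b c d = mk22 (k * a) (k * b) (k * c) (k * d).
Proof.
apply/matrixP => i j; rewrite /mk22 !mxE.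
by case: i => [[|[|//]] Hi]; case: j => [[|[|//]] Hj].
Qed.
Lemma add_mk22 (a b c d a' b' c' d' : C) :
  mk22 a b c d + mk22 a' b' c' d' = mk22 (a + a') (b + b') (c + c') (d + d').
Proof.
apply/matrixP => i j; rewrite /mk22 !mxE.
by case: i => [[|[|//]] Hi]; case: j => [[|[|//]] Hj].
Qed.
Lemma one_mk22 : (1%:M : 'M[C]_2) = mk22 1 0 0 1.
Proof.
apply/matrixP => i j; rewrite /mk22 !mxE.
by case: i => [[|[|//]] Hi]; case: j => [[|[|//]] Hj].
Qed.
Lemma tr_mk22 (a b c d a' b' c' d' : C) :
  \tr (mk22 a b c d *m mk22 a' b' c' d') = a * a' + b * c' + (c * b' + d * d').
Proof.
by rewrite /mxtrace !big_ord_recl !big_ord0 /mk22 !mxE !big_ord_recl !big_ord0 !mxE /= !addr0.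
Qed.
Lemma colE (u : 'cV[C]_2) : u = mk2 (u i0 0) (u i1 0).
Proof.
apply/matrixP => i j; rewrite /mk2 mxE; rewrite (ord1 j).
by case: i => [[|[|//]] Hi] /=; congr (u _ _); apply: val_inj.
Qed.
Lemma psd_of {a b c d : C} :
  (forall p q, 0 <= Num.conj p * (a * p + b * q) + Num.conj q * (c * p + d * q)) ->
  psd (mk22 a b c d).
Proof.
move=> H u; rewrite (colE u); move: (u i0 0) (u i1 0) => p q.
have := H p q.
rewrite /ctrans !mxE !big_ord_recl !big_ord0 !mxE /=.
rewrite !big_ord_recl !big_ord0 !mxE /=.
set L := (X in 0 <= X -> _); set Rr := (X in _ -> 0 <= X).
by have -> : Rr = L by rewrite /L /Rr; ring.
Qed.

Lemma nbnd (f : R) (w : 'rV[R]_3) : bnorm w = f ->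
  (f^-1 * w 0 0)^+2 + (f^-1 * w 0 1)^+2 + (f^-1 * w 0 2)^+2 <= 1 /\
  f^-1 * (w 0 0 ^+ 2 + w 0 1 ^+ 2 + w 0 2 ^+ 2) = f.
Proof.
move/bnormE => [f0 ff]; rewrite -ff.
have [->|fn0] := eqVneq f 0; first by rewrite invr0 !mul0r expr0n /= !addr0 ler01.
split; last by rewrite expr2 mulrA mulVf // mul1r.
by rewrite !exprMn -!mulrDr -ff exprVn mulVf ?expf_neq0.
Qed.

Lemma psd_M (c f : R) (w : 'rV[R]_3) : 0 <= c -> bnorm w = f ->
  psd (c%:C *: bloch_state (f^-1 *: w)).
Proof.
move=> c0 /nbnd [hb _]; rewrite blochE !mxE scale_mk22; apply: psd_of => p q.
move: (f^-1 * w 0 0) (f^-1 * w 0 1) (f^-1 * w 0 2) hb => n0 n1 n2 hb.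
case: p => p0 p1; case: q => q0 q1.
rewrite lecE /= ?(mul0r, mulr0, addr0, add0r, subr0, sub0r, mul1r, mulr1, oppr0, mulN1r).
apply/andP; split; first by apply/eqP; lra.
set Q := (X in _ <= X).
have -> : Q = c * ((((1+n2) * p0+n0 * q0+n1 * q1)/2)^+2 + (((1+n2) * p1+n0 * q1-n1 * q0)/2)^+2
   + ((n0 * p0-n1 * p1+(1-n2) * q0)/2)^+2 + ((n0 * p1+n1 * p0+(1-n2) * q1)/2)^+2
   + (1 - (n0^+2+n1^+2+n2^+2))/4 * (p0^+2+p1^+2+q0^+2+q1^+2)).
  rewrite /Q; lra.
apply: mulr_ge0 => //.
apply: addr_ge0; first by rewrite !addr_ge0 ?sqr_ge0.
apply: mulr_ge0; last by rewrite !addr_ge0 ?sqr_ge0.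
apply: divr_ge0; last by [].
by rewrite subr_ge0.
Qed.

Lemma tr_pair (c f : R) (w : 'rV[R]_3) : bnorm w = f ->
  complex.Im (\tr ((c%:C *: bloch_state (f^-1 *: w)) *m bloch_state w)) = 0 /\
  complex.Re (\tr ((c%:C *: bloch_state (f^-1 *: w)) *m bloch_state w)) = c / 2 * (1 + f).
Proof.
move=> /nbnd [_ hs]; rewrite !blochE !mxE scale_mk22 tr_mk22.
move: (f^-1) hs => g hs.
move: (w 0 0) (w 0 1) (w 0 2) hs => x y z hs.
have hs' : c * (g * (x ^+ 2 + y ^+ 2 + z ^+ 2)) = c * f by rewrite hs.
rewrite /= ?(mul0r, mulr0, addr0, add0r, subr0, sub0r, mul1r, mulr1, oppr0, mulN1r).
split; lra.
Qed.

Lemma eq3 (t0 t1 t2 : C) (k : R) : complex.Im t0 = 0 -> complex.Im t1 = 0 ->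
  complex.Im t2 = 0 -> complex.Re t0 + complex.Re t1 + complex.Re t2 = 3 * k ->
  1/3 * t0 + (1/3 * t1 + (1/3 * t2 + 0)) = k%:C.
Proof.
rewrite c13; case: t0 => a0 b0; case: t1 => a1 b1; case: t2 => a2 b2 /= -> -> -> h.
apply/eqP; rewrite eq_complex /=; apply/andP; split; apply/eqP;
  rewrite ?(mulr0, mul0r, subr0, addr0); lra.
Qed.

Lemma fin_eq (f l0 l1 l2 r0 r1 r2 : R) : l0 + (l1 + l2) = 1 ->
  r0 = 2 * l0 / 2 * (1 + f) -> r1 = 2 * l1 / 2 * (1 + f) -> r2 = 2 * l2 / 2 * (1 + f) ->
  r0 + r1 + r2 = 3 * (1/3 + 1/3 * f).
Proof.
move=> h -> -> ->; have -> : l2 = 1 - l0 - l1 by lra.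
lra.
Qed.

Lemma lower (v : 'I_3 -> 'rV[R]_3) (f : R) :
  (forall x, bnorm (v x) = f) -> origin_in_hull v ->
  exists M, is_povm M /\ succ_prob (fun x => bloch_state (v x)) M = (1/3 + 1/3 * f)%:C.
Proof.
move=> hn [lam [lam0 [lam1 lamv]]].
exists (fun x => (2 * lam x)%:C *: bloch_state (f^-1 *: v x)).
rewrite !big_ord_recl big_ord0 addr0 in lam1.
split; [split|].
- by move=> x; apply: psd_M (hn x); rewrite mulr_ge0.
- have h0 := congr1 (fun A : 'rV[R]_3 => A 0 0) lamv.
  have h1 := congr1 (fun A : 'rV[R]_3 => A 0 1) lamv.
  have h2 := congr1 (fun A : 'rV[R]_3 => A 0 2) lamv.
  rewrite /= !summxE !big_ord_recl !big_ord0 in h0 h1 h2.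
  rewrite [in RHS]mxE mxE mxE mxE ?addr0 in h0.
  rewrite [in RHS]mxE mxE mxE mxE ?addr0 in h1.
  rewrite [in RHS]mxE mxE mxE mxE ?addr0 in h2.
  rewrite !big_ord_recl big_ord0.

  rewrite !blochE.
  rewrite !scale_mk22.
  rewrite (@addr0 _ (mk22 _ _ _ _)).
  rewrite !add_mk22.
  rewrite one_mk22.

  move: (f^-1) => g.
  have g0 : g * (lam ord0 * v ord0 0 0 + (lam (lift ord0 ord0) * v (lift ord0 ord0) 0 0 +
     lam (lift ord0 (lift ord0 ord0)) * v (lift ord0 (lift ord0 ord0)) 0 0)) = 0 by rewrite h0 mulr0.
  have g1 : g * (lam ord0 * v ord0 0 1 + (lam (lift ord0 ord0) * v (lift ord0 ord0) 0 1 +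
     lam (lift ord0 (lift ord0 ord0)) * v (lift ord0 (lift ord0 ord0)) 0 1)) = 0 by rewrite h1 mulr0.
  have g2 : g * (lam ord0 * v ord0 0 2 + (lam (lift ord0 ord0) * v (lift ord0 ord0) 0 2 +
     lam (lift ord0 (lift ord0 ord0)) * v (lift ord0 (lift ord0 ord0)) 0 2)) = 0 by rewrite h2 mulr0.
  rewrite ![((g *: _ : 'rV[R]_3)) _ _]mxE.
  congr (mk22 _ _ _ _); apply/eqP; rewrite eq_complex /=;
    rewrite ?(mul0r, mulr0, addr0, add0r, subr0, sub0r, mul1r, mulr1, oppr0, mulN1r);
    apply/andP; split; apply/eqP; lra.
- rewrite /succ_prob !big_ord_recl big_ord0.
  have T x := @tr_pair (2 * lam x) f (v x) (hn x).
  have [e0 r0] := T ord0.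
  have [e1 r1] := T (lift ord0 ord0).
  have [e2 r2] := T (lift ord0 (lift ord0 ord0)).
  apply: (@eq3 _ _ _ (1/3 + 1/3 * f) e0 e1 e2).
  exact: (@fin_eq f _ _ _ _ _ _ lam1 r0 r1 r2).
Qed.

Theorem mainTheorem6' (v : 'I_3 -> 'rV[R]_3) (f : R) :
  (forall x, is_state (bloch_state (v x))) ->
  (forall x, bnorm (v x) = f) ->
  origin_in_hull v ->
  is_Pguess (fun x => bloch_state (v x)) ((1 / 3 + 1 / 3 * f)%:C).
Proof.
move=> _ hn hh; split.
  by move=> M hM; apply: upper.
exact: lower.
Qed.
End S.

Theorem mainTheorem6 (R : rcfType) (v : 'I_3 -> 'rV[R]_3) (f : R) :
  (forall x, is_state (bloch_state (v x))) ->
  (forall x, bnorm (v x) = f) ->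
  origin_in_hull v ->
  is_Pguess (fun x => bloch_state (v x)) ((1 / 3 + 1 / 3 * f)%:C).
Proof. exact: mainTheorem6'. Qed.
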